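(* In the setting below, for all $j\in\mathcal{S}$ and all $x\in\mathbb{R}^{|\mathcal{S}|}$, if $\|(\mathrm{Id}-B_j)x\|=\|x\|$ then $x\in\operatorname{span}(M^{1/2}_{:,j})^\perp$.
   Context: Setting: $f:\mathbb{R}^p\to\mathbb{R}$ convex, differentiable with Lipschitz gradient; $g_j:\mathbb{R}\to\mathbb{R}\cup\{+\infty\}$ proper closed convex; $x^\star$ a minimizer of $f(x)+\sum_jg_j(x_j)$; $\mathcal{S}=\{j:\partial g_j(x^\star_j)\text{ is a singleton}\}$; $g_j$ is $\mathcal{C}^2$ near $x^\star_j$ for $j\in\mathcal{S}$, $f$ is $\mathcal{C}^2$ near $x^\star$, and $\nabla^2_{\mathcal{S},\mathcal{S}}f(x^\star)\succ0$. Step sizes $0<\gamma_j\le1/L_j$, $L_j$ the coordinatewise Lipschitz constant of $\nabla_jf$. For $j\in\mathcal{S}$, $z^\star_j=x^\star_j-\gamma_j\nabla_jf(x^\star)$, $p_j>0$ the derivative of $\operatorname{prox}_{\gamma_jg_j}$ at $z^\star_j$, $u_j=\frac1{\gamma_jp_j}-\frac1{\gamma_j}$, $M=\nabla^2_{\mathcal{S},\mathcal{S}}f(x^\star)+\operatorname{diag}(u)$ (symmetric positive definite), $M^{1/2}$ its symmetric square root, and $B_j=\gamma_jp_j\,M^{1/2}_{:,j}(M^{1/2}_{:,j})^\top$. $\|\cdot\|$ is the Euclidean norm. *)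

(* Defs.v *)
From HB Require Import structures.
From mathcomp Require Import all_boot all_order all_algebra.
From mathcomp Require Import all_classical all_reals all_analysis.
Set Implicit Arguments. Unset Strict Implicit. Unset Printing Implicit Defensive.
Import Order.TTheory GRing.Theory Num.Theory.
Import numFieldNormedType.Exports.
Local Open Scope classical_set_scope.
Local Open Scope ring_scope.

Section Defs.
Variable R : realType.

Definition enorm (m n : nat) (A : 'M[R]_(m, n)) : R :=
  Num.sqrt (\sum_(i < m) \sum_(j < n) A i j ^+ 2).

Definition ecoord (p : nat) (j : 'I_p) : 'rV[R]_p := delta_mx 0 j.

Definition partial (p : nat) (f : 'rV[R]_p -> R) (j : 'I_p) (x : 'rV[R]_p) : R :=
  derive f x (ecoord j).

Definition grad (p : nat) (f : 'rV[R]_p -> R) (x : 'rV[R]_p) : 'rV[R]_p :=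
  \row_j partial f j x.

Definition hess (p : nat) (f : 'rV[R]_p -> R) (i j : 'I_p) (x : 'rV[R]_p) : R :=
  derive (partial f j) x (ecoord i).

Definition convex_fun (p : nat) (f : 'rV[R]_p -> R) : Prop :=
  forall (x y : 'rV[R]_p) (t : R), 0 <= t <= 1 ->
    f (t *: x + (1 - t) *: y) <= t * f x + (1 - t) * f y.

Definition smooth_Lip_grad (p : nat) (f : 'rV[R]_p -> R) : Prop :=
  (forall x, differentiable f x) /\
  exists Lf : R, forall x y, enorm (grad f x - grad f y) <= Lf * enorm (x - y).

Definition coord_lip_const (p : nat) (f : 'rV[R]_p -> R) (j : 'I_p) (L : R) : Prop :=
  0 <= L /\ forall (x : 'rV[R]_p) (t : R),
    `| partial f j (x + t *: ecoord j) - partial f j x | <= L * `|t|.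

Definition is_coord_lip (p : nat) (f : 'rV[R]_p -> R) (j : 'I_p) (L : R) : Prop :=
  coord_lip_const f j L /\ forall L', coord_lip_const f j L' -> L <= L'.

Definition C2_near (p : nat) (f : 'rV[R]_p -> R) (x : 'rV[R]_p) : Prop :=
  exists2 e : R, 0 < e & forall y : 'rV[R]_p, ball x e y ->
    forall i j : 'I_p, derivable f y (ecoord j) /\
      derivable (partial f j) y (ecoord i) /\
      {for y, continuous (hess f i j)}.

Definition proper_fun (g : R -> \bar R) : Prop :=
  (forall x, g x != -oo%E) /\ exists x, g x \is a fin_num.

Definition closed_fun (g : R -> \bar R) : Prop :=
  closed [set xy : R * R | (g xy.1 <= (xy.2)%:E)%E].

Definition convex_efun (g : R -> \bar R) : Prop :=
  forall (x y t : R), 0 <= t <= 1 ->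
    (g ((t * x + (1 - t) * y)%R) <= t%:E * g x + (1 - t)%:E * g y)%E.

Definition subdiff (g : R -> \bar R) (x : R) : set R :=
  [set s | forall y, (g x + ((s * (y - x))%R)%:E <= g y)%E].

Definition C2_near1 (g : R -> \bar R) (a : R) : Prop :=
  exists2 e : R, 0 < e & forall y : R, `|y - a| < e ->
    [/\ g y \is a fin_num, derivable (fine \o g) y 1,
        derivable (derive1 (fine \o g)) y 1
      & {for y, continuous (derive1 (derive1 (fine \o g)))}].

Definition objective (p : nat) (f : 'rV[R]_p -> R) (g : 'I_p -> R -> \bar R)
  (x : 'rV[R]_p) : \bar R := ((f x)%:E + \sum_(j < p) g j (x ord0 j))%E.

Definition Sset (p : nat) (g : 'I_p -> R -> \bar R) (xs : 'rV[R]_p) : {set 'I_p} :=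
  [set j | `[< exists s : R, subdiff (g j) (xs 0 j) = [set s] >] ].

Definition is_prox (gam : R) (g : R -> \bar R) (z x : R) : Prop :=
  forall y, (g x + (((x - z) ^+ 2 / (2 * gam))%R)%:E <= g y + (((y - z) ^+ 2 / (2 * gam))%R)%:E)%E.

End Defs.

(* Main.v *)
Require Import Defs.
From HB Require Import structures.
From mathcomp Require Import all_boot all_order all_algebra.
From mathcomp Require Import all_classical all_reals all_analysis.
From mathcomp Require Import ring lra.
Import Order.TTheory GRing.Theory Num.Theory.
Import numFieldNormedType.Exports.
Local Open Scope classical_set_scope.
Local Open Scope ring_scope.


Lemma hess_le (R : realType) p (f : 'rV[R]_p -> R) j L x :
  coord_lip_const f j L -> derivable (partial f j) x (ecoord R j) ->
  hess f j j x <= L.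
Proof.
move=> [L0 HL] dv; rewrite /hess /derive; apply: limr_le => //.
near=> h.
have h0 : h != 0 by near: h; exact: nbhs_dnbhs_neq.
rewrite /= /shift /= [_ + x]addrC.
apply: le_trans (ler_norm _) _.
rewrite normrZ normfV.
have := HL x h.
rewrite -ler_pdivlMl ?normr_gt0 //.
by rewrite invrK mulrC.
by rewrite invr_gt0 normr_gt0.
Unshelve. all: by end_near.
Qed.

Theorem lemma7 (R : realType) (p : nat)
  (f : 'rV[R]_p -> R) (g : 'I_p -> R -> \bar R) (xs : 'rV[R]_p)
  (L gam : 'I_p -> R) (prox : 'I_p -> R -> R) (pd : 'I_p -> R)
  (Q : 'M[R]_#|Sset g xs|) :
  (* f convex, differentiable with Lipschitz gradient *)
  convex_fun f -> smooth_Lip_grad f ->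
  (* g_j proper closed convex *)
  (forall j, [/\ proper_fun (g j), closed_fun (g j) & convex_efun (g j)]) ->
  (* xs minimizes f(x) + sum_j g_j(x_j) *)
  (forall y, (objective f g xs <= objective f g y)%E) ->
  (* regularity near xs *)
  (forall j, j \in Sset g xs -> C2_near1 (g j) (xs 0 j)) ->
  C2_near f xs ->
  (* Hessian of f restricted to S x S is positive definite *)
  (forall v : 'cV[R]_#|Sset g xs|, v != 0 ->
     0 < (v^T *m (\matrix_(a, b) hess f (enum_val a) (enum_val b) xs) *m v) 0 0) ->
  (* L_j is the coordinatewise Lipschitz constant; 0 < gam_j <= 1/L_j *)
  (forall j, is_coord_lip f j (L j)) ->
  (forall j, 0 < gam j /\ gam j * L j <= 1) ->
  (* prox j = prox_{gam_j g_j} *)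
  (forall j z, is_prox (gam j) (g j) z (prox j z)) ->
  (* pd_j > 0 is the derivative of prox_{gam_j g_j} at z*_j = xs_j - gam_j nabla_j f(xs) *)
  (forall j, j \in Sset g xs ->
     is_derive (xs 0 j - gam j * partial f j xs) 1 (prox j) (pd j) /\ 0 < pd j) ->
  (* Q = M^{1/2}: symmetric positive semidefinite square root of
     M = nabla^2_{S,S} f(xs) + diag(u),  u_j = 1/(gam_j pd_j) - 1/gam_j *)
  Q^T = Q ->
  (forall v : 'cV[R]_#|Sset g xs|, 0 <= (v^T *m Q *m v) 0 0) ->
  Q *m Q = \matrix_(a, b) (hess f (enum_val a) (enum_val b) xs
             + (a == b)%:R * (1 / (gam (enum_val a) * pd (enum_val a))
                              - 1 / gam (enum_val a))) ->
  (* conclusion, for every j in S (indexed by k : 'I_|S|, j = enum_val k) *)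
  forall (k : 'I_#|Sset g xs|) (x : 'cV[R]_#|Sset g xs|),
    let Bk := (gam (enum_val k) * pd (enum_val k)) *: (col k Q *m (col k Q)^T) in
    enorm ((1%:M - Bk) *m x) = enorm x ->
    forall w : 'rV[R]_#|Sset g xs|, (w <= (col k Q)^T)%MS -> (w *m x) 0 0 = 0.
Proof.
move=> _ _ _ _ _ [e e0 C2] _ Lip Hgam _ Hprox QT _ QQ k x Bk Hn w Hw.
set j := enum_val k.
have jS : j \in Sset g xs by exact: enum_valP.
have [_ [dv _]] := C2 xs (ballxx _ e0) j j.
have HL := hess_le _ _ _ _ _ _ (proj1 (Lip j)) dv.
have [gam0 gamL] := Hgam j.
have [_ pd0] := Hprox j jS.
set c := gam j * pd j.
have c0 : 0 < c by rewrite mulr_gt0.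
set s := \sum_l Q l k * x l 0.
set N := \sum_i Q i k ^+ 2.
have HN : N = hess f j j xs + (c^-1 - (gam j)^-1).
  have := congr1 (fun A : 'M[R]_#|Sset g xs| => A k k) QQ; rewrite !mxE eqxx /= !mul1r -/j -/c => <-.
  rewrite /N; apply: eq_bigr => i _.
  have := congr1 (fun A : 'M[R]_#|Sset g xs| => A i k) QT; rewrite mxE => ->.
  by rewrite expr2.
have Hy : forall i, ((1%:M - Bk) *m x) i 0 = x i 0 - c * Q i k * s.
  move=> i; rewrite mulmxBl mul1mx /Bk -scalemxAl -mulmxA !mxE big_ord1 !mxE.
  rewrite /s mulrA; congr (_ - _ * _); apply: eq_bigr => l _; by rewrite !mxE.
have Hsq : \sum_i (x i 0 - c * Q i k * s) ^+ 2 = \sum_i x i 0 ^+ 2.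
  move: Hn; rewrite /enorm => Hn.
  have := congr1 (fun a => a ^+ 2) Hn; rewrite !sqr_sqrtr; last 2 first.
  - by apply: sumr_ge0 => i _; apply: sumr_ge0 => l _; exact: sqr_ge0.
  - by apply: sumr_ge0 => i _; apply: sumr_ge0 => l _; exact: sqr_ge0.
  rewrite !(eq_bigr _ (fun i _ => big_ord1 _ _)) /=.
  by under eq_bigr do rewrite Hy.
have E : \sum_i (x i 0 - c * Q i k * s) ^+ 2 = \sum_i x i 0 ^+ 2 + s ^+ 2 * (c ^+ 2 * N - 2 * c).
  have -> : \sum_i (x i 0 - c * Q i k * s) ^+ 2 = \sum_i (x i 0 ^+ 2 + (c ^+ 2 * s ^+ 2 * Q i k ^+ 2 - 2 * c * s * (Q i k * x i 0))).
    by apply: eq_bigr => i _; ring.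
  rewrite big_split /=; congr (_ + _).
  rewrite sumrB -!mulr_sumr -/N -/s; ring.
have s2 : s ^+ 2 * (c ^+ 2 * N - 2 * c) = 0.
  by apply: (addrI (\sum_i x i 0 ^+ 2)); rewrite -E Hsq addr0.
have neg : c ^+ 2 * N - 2 * c < 0.
  have gH : gam j * hess f j j xs <= 1.
    by apply: le_trans gamL; rewrite ler_pM2l.
  have -> : c ^+ 2 * N - 2 * c = c * (pd j * (gam j * hess f j j xs - 1) - 1).
    by rewrite HN /c; field; rewrite !gt_eqF.
  rewrite pmulr_rlt0 // subr_lt0; apply: le_lt_trans (ltr01).
  by rewrite pmulr_rle0 // subr_le0.
have s0 : s = 0.
  move: s2 => /eqP; rewrite mulf_eq0 (lt_eqF neg) orbF sqrf_eq0 => /eqP //.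
have [D ->] := submxP Hw.
rewrite -mulmxA mxE big_ord1 mxE.
have -> : \sum_l (col k Q)^T 0 l * x l 0 = s by apply: eq_bigr => l _; rewrite !mxE.
by rewrite s0 mulr0.
Qed.
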